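(* Let $0<\alpha<1$ and for integers $n\ge 2$ define $w_k^{(\alpha)}=(-1)^k\binom{\alpha}{k}$, $$W_n^0=\sum_{k=0}^{n-1}w_k^{(\alpha)},\qquad W_n^1=nW_n^0-\sum_{k=0}^{n-1}k\,w_k^{(\alpha)}-\frac{(n-\alpha/2)^{1-\alpha}}{\Gamma(2-\alpha)}.$$ Then, as $n\to\infty$, $$W_n^0=\frac{1}{\Gamma(1-\alpha)n^\alpha}-\frac{\alpha+1}{2\Gamma(-\alpha)n^{1+\alpha}}+\frac{(2+\alpha)(1+3\alpha)}{24\,\Gamma(-1-\alpha)n^{2+\alpha}}+O\!\left(\frac{1}{n^{3+\alpha}}\right),$$ $$W_n^1=\frac{\alpha-2}{24\,\Gamma(-\alpha)n^{1+\alpha}}+O\!\left(\frac{1}{n^{2+\alpha}}\right).$$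
   Context: Binomial coefficients with real upper argument are $\binom{a}{k}=\frac{a(a-1)\cdots(a-k+1)}{k!}$, $\binom{a}{0}=1$. $\Gamma$ is the Euler gamma function, extended to negative non-integer arguments by analytic continuation. *)

(* Defs.v *)
From Stdlib Require Import Reals Lra Lia ClassicalEpsilon Factorial.
Open Scope R_scope.

Fixpoint sumR (n : nat) (f : nat -> R) : R :=
  match n with O => 0 | S m => sumR m f + f m end.

Fixpoint prodR (n : nat) (f : nat -> R) : R :=
  match n with O => 1 | S m => prodR m f * f m end.

Definition gbinom (a : R) (k : nat) : R :=
  prodR k (fun i => a - INR i) / INR (fact k).

(* Gauss/Euler product sequence for Gamma:
   n! n^x / (x (x+1) ... (x+n)) *)
Definition gamma_seq (x : R) (n : nat) : R :=
  INR (fact n) * Rpower (INR n) x / prodR (S n) (fun k => x + INR k).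

(* Euler Gamma function, valid (by Gauss's limit formula) for all real x
   that are not non-positive integers, including negative non-integers
   (where it agrees with the analytic continuation). *)
Definition Gamma (x : R) : R :=
  epsilon (inhabits 0) (fun g => Un_cv (gamma_seq x) g).

Definition w (alpha : R) (k : nat) : R := (-1) ^ k * gbinom alpha k.

Definition W0 (alpha : R) (n : nat) : R := sumR n (fun k => w alpha k).

Definition W1 (alpha : R) (n : nat) : R :=
  INR n * W0 alpha n - sumR n (fun k => INR k * w alpha k)
  - Rpower (INR n - alpha / 2) (1 - alpha) / Gamma (2 - alpha).

(* Main.v *)
Require Import Defs.
From Coquelicot Require Import Coquelicot.
From Stdlib Require Import Reals Lra Lia ClassicalEpsilon.
Open Scope R_scope.

Lemma Rpower_one_base x : Rpower 1 x = 1.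
Proof. unfold Rpower. rewrite ln_1, Rmult_0_r. apply exp_0. Qed.

Lemma rp_deriv c s t : 0 < 1+s*t ->
  is_derive (fun u => Rpower (1+s*u) c) t (s * (c * Rpower (1+s*t) (c-1))).
Proof.
  intro H.
  apply (is_derive_comp (fun x => Rpower x c) (fun u => 1+s*u)).
  - apply is_derive_Reals. apply derivable_pt_lim_power. exact H.
  - auto_derive; auto. ring.
Qed.

Lemma loc_pos s t : Rabs s <= 1 -> 0 < 1+s*t -> locally t (fun u => 0 < 1+s*u).
Proof.
  intros Hs H.
  assert (He : 0 < (1+s*t)/2) by lra.
  exists (mkposreal _ He). intros y Hy.
  change (Rabs (y - t) < (1+s*t)/2) in Hy.
  assert (Rabs (s*(y-t)) <= Rabs (y-t)).
  { rewrite Rabs_mult. rewrite <- (Rmult_1_l (Rabs (y-t))) at 2.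
    apply Rmult_le_compat_r; [apply Rabs_pos|exact Hs]. }
  pose proof (Rle_abs (-(s*(y-t)))) as H2. rewrite Rabs_Ropp in H2.
  lra.
Qed.

Definition Dk c k := prodR k (fun i => c - INR i).

Section Tay.
Variables c s : R.
Hypothesis Hs : Rabs s <= 1.
Let f := fun u => Rpower (1+s*u) c.
Let g k := fun u => s^k * Dk c k * Rpower (1+s*u) (c - INR k).

Lemma g_der k t : 0 < 1+s*t -> is_derive (g k) t (g (S k) t).
Proof.
  intro H. unfold g.
  replace (s ^ S k * Dk c (S k) * Rpower (1 + s * t) (c - INR (S k)))
   with (s^k * Dk c k * (s * ((c - INR k) * Rpower (1+s*t) ((c - INR k) - 1)))).
  - apply is_derive_scal. apply rp_deriv. exact H.
  - unfold Dk. simpl prodR. rewrite S_INR. replace (c - INR k - 1) with (c - (INR k + 1)) by ring. simpl. ring.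
Qed.

Lemma Dn_eq k : forall t, 0 < 1+s*t -> Derive_n f k t = g k t /\ ex_derive_n f k t.
Proof.
  induction k as [|k IH]; intros t H.
  - split; [|exact I]. simpl. unfold f, g, Dk. simpl. rewrite Rminus_0_r. ring.
  - assert (Hl : locally t (fun u => Derive_n f k u = g k u)).
    { apply (filter_imp (fun u => 0 < 1+s*u)). intros u Hu. apply IH; exact Hu.
      apply loc_pos; assumption. }
    split.
    + simpl. rewrite (Derive_ext_loc _ (g k) t Hl). apply is_derive_unique. apply g_der; exact H.
    + simpl. apply (ex_derive_ext_loc (g k)). 
      apply (filter_imp (fun u => 0 < 1+s*u)). intros u Hu. symmetry. apply IH; exact Hu.
      apply loc_pos; assumption.
      eexists. apply g_der. exact H.
Qed.
End Tay.


Lemma Rpower_neg_mono a b e : 0 < a -> a <= b -> e <= 0 -> Rpower b e <= Rpower a e.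
Proof.
  intros Ha Hab He.
  replace e with (- (-e)) by ring. rewrite (Rpower_Ropp b (-e)), (Rpower_Ropp a (-e)).
  apply Rinv_le_contravar. unfold Rpower; apply exp_pos.
  apply Rle_Rpower_l; lra.
Qed.

Lemma taylor3 c s y : Rabs s <= 1 -> 0 < y <= 1/2 -> c <= 4 ->
  Rabs (Rpower (1+s*y) c - (1 + c*s*y + c*(c-1)/2 * s^2*y^2 + c*(c-1)*(c-2)/6*s^3*y^3))
  <= Rabs (Dk c 4) / 24 * Rpower (1/2) (c-4) * y^4.
Proof.
  intros Hs Hy Hc.
  destruct (Taylor_Lagrange (fun u => Rpower (1+s*u) c) 3 0 y) as [z [Hz E]].
  lra.
  intros t Ht k _. apply (Dn_eq c s Hs). 
  assert (Rabs (s*t) <= 1/2).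
  { rewrite Rabs_mult. rewrite (Rabs_pos_eq t) by lra.
    apply Rle_trans with (1*t). apply Rmult_le_compat_r; lra. lra. }
  pose proof (Rle_abs (-(s*t))). rewrite Rabs_Ropp in H0. lra.
  assert (Hsz : 1/2 <= 1 + s*z).
  { assert (Rabs (s*z) <= 1/2).
    { rewrite Rabs_mult. rewrite (Rabs_pos_eq z) by lra.
      apply Rle_trans with (1*z). apply Rmult_le_compat_r; lra. lra. }
    pose proof (Rle_abs (-(s*z))). rewrite Rabs_Ropp in H0. lra. }
  rewrite E. cbn [sum_f_R0].
  rewrite !(proj1 (Dn_eq c s Hs _ 0 ltac:(lra))).
  rewrite !(proj1 (Dn_eq c s Hs _ z ltac:(lra))).
  unfold Dk. simpl prodR. simpl INR. rewrite Rmult_0_r, Rplus_0_r, Rpower_one_base.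
  simpl Factorial.fact. simpl INR. rewrite !Rminus_0_r.
  rewrite !Rpower_one_base.
  replace (c - (1+1+1+1)) with (c-4) by ring.
  set (P := Rpower (1 + s * z) (c - 4)).
  match goal with |- Rabs ?e <= _ =>
    replace e with ((y^4/24) * (s^4 * (c*(c-1)*(c-2)*(c-3)) * P)) by (field) end.
  replace (1 * c * (c - 1) * (c - (1 + 1)) * (c - (1 + 1 + 1))) with (c*(c-1)*(c-2)*(c-3)) by ring.
  set (D := c*(c-1)*(c-2)*(c-3)).
  assert (HP0 : 0 < P) by (unfold P, Rpower; apply exp_pos).
  assert (HP : P <= Rpower (1/2) (c-4)) by (apply Rpower_neg_mono; lra).
  rewrite !Rabs_mult. rewrite (Rabs_pos_eq (y^4/24)) by (apply Rmult_le_pos; [apply pow_le; lra| lra]).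
  rewrite (Rabs_pos_eq P) by lra. rewrite <- RPow_abs.
  assert (Hs4 : Rabs s ^ 4 <= 1).
  { rewrite <- (pow1 4). apply pow_incr. split; [apply Rabs_pos|exact Hs]. }
  assert (H0 : 0 <= Rabs s ^ 4) by (apply pow_le; apply Rabs_pos).
  assert (H1 : 0 <= Rabs D) by apply Rabs_pos.
  assert (H2 : 0 <= y^4) by (apply pow_le; lra).
  set (A := Rabs D) in *. set (B := Rpower (1/2) (c-4)) in *.
  set (Y := y^4) in *. set (S4 := Rabs s ^ 4) in *.
  apply Rle_trans with (Y/24 * (1 * A * B)).
  apply Rmult_le_compat_l. lra.
  apply Rmult_le_compat; [nra|lra|nra|lra].
  right. field.
Qed.

Section Comb.
Variable a : R.
Hypothesis Ha0 : 0 < a.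
Hypothesis Ha1 : a < 1.

Lemma w_succ k : w a (S k) = w a k * (INR k - a) / (INR k + 1).
Proof.
  unfold w, gbinom. simpl prodR. rewrite fact_simpl, mult_INR, S_INR.
  simpl pow. field. split. apply INR_fact_neq_0. pose proof (pos_INR k); lra.
Qed.

Lemma sumR_S n f : sumR (S n) f = sumR n f + f n.
Proof. reflexivity. Qed.

Lemma W0_S n : W0 a (S n) = W0 a n + w a n.
Proof. reflexivity. Qed.

Lemma w_W0 k : w a (S k) = - a / (INR k + 1) * W0 a (S k).
Proof.
  induction k as [|k IH].
  - unfold W0, w, gbinom. simpl. field.
  - rewrite w_succ, IH. rewrite (W0_S (S k)), IH. rewrite S_INR.
    pose proof (pos_INR k). field. lra.
Qed.

Lemma W0_succ n : (1 <= n)%nat -> W0 a (S n) = W0 a n * (1 - a / INR n).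
Proof.
  intro H. destruct n as [|k]. lia.
  rewrite W0_S, w_W0, S_INR. field. pose proof (pos_INR k); lra.
Qed.

Lemma W0_pos n : (1 <= n)%nat -> 0 < W0 a n.
Proof.
  induction n as [|n IH]; intro H. lia.
  destruct n as [|n]. unfold W0, w, gbinom; simpl; lra.
  rewrite W0_succ by lia. apply Rmult_lt_0_compat. apply IH; lia.
  rewrite S_INR. pose proof (pos_INR n).
  assert (a / (INR n + 1) < 1). { apply Rmult_lt_reg_r with (INR n + 1). lra. field_simplify; lra. }
  lra.
Qed.

Lemma W0_fact n : W0 a (S n) * INR (Factorial.fact n) = prodR n (fun k => 1 - a + INR k).
Proof.
  induction n as [|n IH].
  - unfold W0, w, gbinom. simpl. lra.
  - rewrite W0_succ by lia. simpl prodR. rewrite <- IH. rewrite fact_simpl, mult_INR, S_INR.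
    pose proof (pos_INR n). field. lra.
Qed.

Lemma T_id n : (1 <= n)%nat ->
  INR n * W0 a n - sumR n (fun k => INR k * w a k) = (INR n - a) * W0 a n / (1 - a).
Proof.
  induction n as [|n IH]; intro H. lia.
  destruct n as [|n].
  - unfold W0, w, gbinom. simpl. field. lra.
  - rewrite (sumR_S (S n)).
    assert (E : W0 a (S n) = W0 a (S (S n)) * (INR (S n)) / (INR (S n) - a)).
    { rewrite (W0_succ (S n)) by lia. field. split. rewrite S_INR; pose proof (pos_INR n); lra.
      rewrite S_INR; pose proof (pos_INR n); lra. }
    replace (INR (S (S n)) * W0 a (S (S n)) - (sumR (S n) (fun k => INR k * w a k) + INR (S n) * w a (S n)))
      with ((INR (S n) * W0 a (S n) - sumR (S n) (fun k => INR k * w a k)) + W0 a (S (S n))).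
    2:{ rewrite (W0_S (S n)). rewrite (S_INR (S n)). ring. }
    rewrite IH by lia. rewrite E. rewrite (S_INR (S n)).
    pose proof (pos_INR n). rewrite S_INR. field. lra.
Qed.
End Comb.

Lemma prod_shift n f : prodR (S n) f = f 0%nat * prodR n (fun k => f (S k)).
Proof.
  induction n as [|n IH]. simpl. ring.
  change (prodR (S (S n)) f) with (prodR (S n) f * f (S n)). rewrite IH. simpl. ring.
Qed.

Lemma prod_ext n f g : (forall k, f k = g k) -> prodR n f = prodR n g.
Proof. intro H. induction n; simpl; congruence. Qed.

Lemma prod_nz x n : (forall k, x + INR k <> 0) -> prodR n (fun k => x + INR k) <> 0.
Proof.
  intro H. induction n as [|n IH]; simpl. lra. apply Rmult_integral_contrapositive. split; auto.
Qed.

Lemma lim_inv_n : is_lim_seq (fun n => / INR n) 0.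
Proof.
  replace (Finite 0) with (Rbar_inv p_infty) by reflexivity.
  apply is_lim_seq_inv. apply is_lim_seq_INR. discriminate.
Qed.

Lemma gamma_seq_rel x m : (1 <= m)%nat -> (forall k, x + INR k <> 0) ->
  gamma_seq x m = gamma_seq (x+1) m * ((x + INR m + 1) / (x * INR m)).
Proof.
  intros Hm H.
  assert (Hx : x <> 0) by (specialize (H 0%nat); simpl in H; lra).
  assert (Hm' : 0 < INR m) by (apply lt_0_INR; lia).
  unfold gamma_seq.
  assert (E : prodR (S (S m)) (fun k => x + INR k) = x * prodR (S m) (fun k => x + 1 + INR k)).
  { rewrite prod_shift. simpl (INR 0). rewrite Rplus_0_r. f_equal.
    apply prod_ext. intro k. rewrite S_INR. ring. }
  change (prodR (S (S m)) (fun k => x + INR k)) with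
    (prodR (S m) (fun k => x + INR k) * (x + INR (S m))) in E.
  rewrite S_INR in E.
  assert (Hp : prodR (S m) (fun k => x + 1 + INR k) = prodR (S m) (fun k => x + INR k) * (x + (INR m + 1)) / x).
  { rewrite E. field. exact Hx. }
  rewrite Hp. rewrite Rpower_plus, Rpower_1 by exact Hm'.
  pose proof (prod_nz x (S m) H).
  assert (x + (INR m + 1) <> 0) by (specialize (H (S m)); rewrite S_INR in H; exact H).
  assert (0 < Rpower (INR m) x) by (unfold Rpower; apply exp_pos).
  field. repeat split; try lra; auto.
Qed.

Lemma Gamma_eq x g : Un_cv (gamma_seq x) g -> Gamma x = g.
Proof.
  intro H. unfold Gamma.
  apply (UL_sequence (gamma_seq x)); [|exact H].
  apply (epsilon_spec (inhabits 0) (fun g => Un_cv (gamma_seq x) g)). exists g; exact H.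
Qed.

Lemma Gamma_shift x g : (forall k, x + INR k <> 0) ->
  Un_cv (gamma_seq (x+1)) g -> Un_cv (gamma_seq x) (g / x).
Proof.
  intros H Hg.
  assert (Hx : x <> 0) by (specialize (H 0%nat); simpl in H; lra).
  apply is_lim_seq_Reals in Hg. apply is_lim_seq_Reals.
  apply is_lim_seq_ext_loc with (fun m => gamma_seq (x+1) m * (/x + (x+1)/x * / INR m)).
  - exists 1%nat. intros m Hm. rewrite (gamma_seq_rel x m) by assumption. f_equal.
    assert (0 < INR m) by (apply lt_0_INR; lia). field. lra.
  - replace (g / x) with (g * (/x + (x+1)/x * 0)) by (field; exact Hx).
    apply is_lim_seq_mult'. exact Hg. apply is_lim_seq_plus'. apply is_lim_seq_const.
    apply is_lim_seq_mult'. apply is_lim_seq_const. apply lim_inv_n.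
Qed.

Section A.
Variable a : R.
Hypothesis Ha0 : 0 < a.
Hypothesis Ha1 : a < 1.

Definition cc1 := a*(a+1)/2.
Definition cc2 := a*(1+a)*(2+a)*(1+3*a)/24.
Definition Fx x := 1 + cc1*x + cc2*x^2.
Definition p4 := ((1/4)*a^1 + (-5/6)*a^2 + (-13/16)*a^3 + (-53/48)*a^4 + (-7/16)*a^5 + (-1/16)*a^6).
Definition p5 := ((1/3)*a^1 + (-23/36)*a^2 + (-109/72)*a^4 + (-19/24)*a^5 + (-25/72)*a^6 + (-1/24)*a^7).
Definition p6 := ((-11/72)*a^2 + (47/144)*a^3 + (-61/144)*a^4 + (-17/72)*a^5 + (-29/72)*a^6 + (-13/144)*a^7 + (-1/48)*a^8).
Definition p7 := ((1/36)*a^2 + (-7/72)*a^3 + (1/36)*a^4 + (11/72)*a^5 + (-1/72)*a^6 + (-1/18)*a^7 + (-1/24)*a^8).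
Definition p8 := ((-1/36)*a^3 + (-1/12)*a^4 + (5/144)*a^5 + (5/48)*a^6 + (-1/144)*a^7 + (-1/48)*a^8).
Definition Pp x := p4 + x*(p5 + x*(p6 + x*(p7 + x*p8))).
Definition T3 x := 1 + a*x + a*(a-1)/2*x^2 + a*(a-1)*(a-2)/6*x^3.

Lemma Nid x : T3 x * (1 - a*x) * Fx x * (1+x)^2 - ((1+x)^2 + cc1*x*(1+x) + cc2*x^2) = x^4 * Pp x.
Proof. unfold T3, Fx, Pp, cc1, cc2, p4, p5, p6, p7, p8. field. Qed.


Lemma horner_step u v x : 0 <= x <= 1 -> Rabs (u + x*v) <= Rabs u + Rabs v.
Proof.
  intro Hx. eapply Rle_trans. apply Rabs_triang. apply Rplus_le_compat_l.
  rewrite Rabs_mult, (Rabs_pos_eq x) by lra.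
  pose proof (Rabs_pos v). nra.
Qed.

Definition Pb := Rabs p4 + (Rabs p5 + (Rabs p6 + (Rabs p7 + Rabs p8))).

Lemma Pp_bound x : 0 <= x <= 1 -> Rabs (Pp x) <= Pb.
Proof.
  intro Hx. unfold Pp, Pb.
  eapply Rle_trans. apply horner_step; exact Hx. apply Rplus_le_compat_l.
  eapply Rle_trans. apply horner_step; exact Hx. apply Rplus_le_compat_l.
  eapply Rle_trans. apply horner_step; exact Hx. apply Rplus_le_compat_l.
  apply horner_step; exact Hx.
Qed.

Lemma cc1_pos : 0 < cc1. Proof. unfold cc1. apply Rmult_lt_0_compat; [nra|lra]. Qed.
Lemma cc2_pos : 0 < cc2.
Proof. unfold cc2. apply Rmult_lt_0_compat; [|lra]. repeat apply Rmult_lt_0_compat; lra. Qed.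

Definition K3 (b : R) := Rabs (Dk b 4) / 24 * Rpower (1/2) (b-4).
Definition Kr := Pb + K3 a * ((1 + cc1 + cc2) * 4).

Lemma K3_pos b : 0 <= K3 b.
Proof. unfold K3. apply Rmult_le_pos. pose proof (Rabs_pos (Dk b 4)); lra.
  unfold Rpower; left; apply exp_pos. Qed.

Lemma rho_bound x : 0 < x <= 1/2 ->
  Rabs (Rpower (1+x) a * (1 - a*x) * Fx x / Fx (x/(1+x)) - 1) <= Kr * x^4.
Proof.
  intro Hx.
  pose proof (taylor3 a 1 x ltac:(rewrite Rabs_R1; lra) Hx ltac:(lra)) as Ht.
  set (E := Rpower (1+1*x) a - _) in Ht.
  assert (HR : Rpower (1+x) a = T3 x + E).
  { unfold E, T3. rewrite Rmult_1_l. ring. }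
  fold (K3 a) in Ht.
  set (Dn := (1+x)^2 + cc1*x*(1+x) + cc2*x^2).
  pose proof cc1_pos. pose proof cc2_pos.
  assert (HD : 1 <= Dn).
  { unfold Dn. assert (0 <= cc1*x*(1+x)) by (apply Rmult_le_pos; [apply Rmult_le_pos|]; lra).
    assert (0 <= cc2*x^2) by (apply Rmult_le_pos; [lra|apply pow_le; lra]). nra. }
  assert (HF : Fx (x/(1+x)) = Dn / (1+x)^2).
  { unfold Fx, Dn. field. lra. }
  assert (Hid : Rpower (1+x) a * (1 - a*x) * Fx x / Fx (x/(1+x)) - 1
     = (x^4 * Pp x + E * ((1 - a*x) * Fx x * (1+x)^2)) / Dn).
  { rewrite HF, HR. rewrite <- (Nid x). unfold Dn. field. fold Dn. split; lra. }
  rewrite Hid. unfold Rdiv. rewrite Rabs_mult.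
  rewrite Rabs_Rinv by lra. rewrite (Rabs_pos_eq Dn) by lra.
  assert (Hb1 : Rabs (x^4 * Pp x + E * ((1 - a*x) * Fx x * (1+x)^2)) <= Kr * x^4).
  { eapply Rle_trans. apply Rabs_triang.
    assert (HP : Rabs (Pp x) <= Pb) by (apply Pp_bound; lra).
    assert (HG : Rabs ((1 - a*x) * Fx x * (1+x)^2) <= (1 + cc1 + cc2) * 4).
    { assert (0 < 1 - a*x <= 1) by nra.
      assert (0 < Fx x <= 1 + cc1 + cc2).
      { unfold Fx. split. assert (0 <= cc2 * x^2) by (apply Rmult_le_pos; [lra|apply pow_le;lra]). nra.
        assert (x^2 <= 1) by (simpl; nra). assert (cc2*x^2 <= cc2*1) by (apply Rmult_le_compat_l; lra). nra. }
      assert (0 < (1+x)^2 <= 4) by (simpl; nra).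
      rewrite Rabs_pos_eq by (apply Rmult_le_pos; [apply Rmult_le_pos|]; lra).
      apply Rmult_le_compat; try lra. apply Rmult_le_pos; lra.
      rewrite <- (Rmult_1_l (1 + cc1 + cc2)). apply Rmult_le_compat; lra. }
    assert (HE : Rabs (E * ((1 - a*x) * Fx x * (1+x)^2)) <= K3 a * x^4 * ((1 + cc1 + cc2) * 4)).
    { rewrite Rabs_mult. apply Rmult_le_compat; try apply Rabs_pos; lra. }
    assert (HQ : Rabs (x^4 * Pp x) <= x^4 * Pb).
    { rewrite Rabs_mult, (Rabs_pos_eq (x^4)) by (apply pow_le; lra).
      apply Rmult_le_compat_l. apply pow_le; lra. exact HP. }
    unfold Kr. lra. }
  assert (0 <= Kr * x^4).
  { eapply Rle_trans; [apply Rabs_pos|exact Hb1]. }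
  rewrite Rmult_comm. apply Rle_trans with (1 * (Kr * x^4)).
  apply Rmult_le_compat; [left; apply Rinv_0_lt_compat; lra | apply Rabs_pos |
    (rewrite <- Rinv_1; apply Rinv_le_contravar; lra) | exact Hb1]. lra.
Qed.
End A.

Lemma ln_bound u : Rabs (u - 1) <= 1/2 -> Rabs (ln u) <= 2 * Rabs (u - 1).
Proof.
  intro H. apply Rabs_le_between' in H.
  assert (Hu : 0 < u) by lra.
  assert (H1 : ln u <= u - 1).
  { rewrite <- (ln_exp (u-1)). apply ln_le. exact Hu.
    pose proof (exp_ineq1_le (u-1)). lra. }
  assert (H2 : ln (/u) <= /u - 1).
  { rewrite <- (ln_exp (/u-1)). apply ln_le. apply Rinv_0_lt_compat; exact Hu.
    pose proof (exp_ineq1_le (/u-1)). lra. }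
  rewrite ln_Rinv in H2 by exact Hu.
  assert (/u - 1 = (1 - u)/u) by (field; lra).
  assert ((1-u)/u <= 2 * Rabs (u-1)).
  { destruct (Rle_dec u 1).
    - rewrite Rabs_left1 by lra. apply Rmult_le_reg_r with u. exact Hu.
      unfold Rdiv. rewrite Rmult_assoc, Rinv_l by lra. nra.
    - assert ((1-u)/u <= 0). { unfold Rdiv. apply Rmult_le_0_r. lra. left; apply Rinv_0_lt_compat; lra. }
      pose proof (Rabs_pos (u-1)). lra. }
  apply Rabs_le. pose proof (Rle_abs (u-1)). pose proof (Rabs_pos (u-1)). split; lra.
Qed.

Lemma exp_bound d : Rabs d <= 1/2 -> Rabs (exp d - 1) <= 2 * Rabs d.
Proof.
  intro H. pose proof (Rle_abs d) as A1. pose proof (Rle_abs (-d)) as A2. rewrite Rabs_Ropp in A2.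
  pose proof (exp_ineq1_le d). pose proof (exp_ineq1_le (-d)).
  assert (E : exp d * exp (-d) = 1) by (rewrite <- exp_plus; replace (d + -d) with 0 by ring; apply exp_0).
  assert (exp d <= 1 + 2 * Rabs d).
  { destruct (Rle_dec 0 d).
    - rewrite Rabs_pos_eq by lra. pose proof (exp_pos d). nra.
    - assert (exp d <= 1). { rewrite <- exp_0. left; apply exp_increasing; lra. }
      pose proof (Rabs_pos d). lra. }
  apply Rabs_le. split; lra.
Qed.

Lemma conv_tele (v t : nat -> R) :
  (forall j k, (j <= k)%nat -> Rabs (v k - v j) <= t j) ->
  (forall eps, 0 < eps -> exists j, t j < eps) ->
  exists l, Un_cv v l /\ forall j, Rabs (v j - l) <= t j.
Proof.
  intros Ht Heps.
  assert (Hc : Cauchy_crit v).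
  { intros eps He. destruct (Heps (eps/2)) as [N HN]. lra.
    exists N. intros j k Hj Hk. unfold R_dist.
    pose proof (Ht N j Hj). pose proof (Ht N k Hk).
    replace (v j - v k) with ((v j - v N) - (v k - v N)) by ring.
    eapply Rle_lt_trans. apply Rabs_triang. rewrite Rabs_Ropp. lra. }
  destruct (R_complete v Hc) as [l Hl].
  exists l. split. exact Hl.
  intro j. apply Rle_plus_epsilon. intros eps He.
  destruct (Hl eps He) as [M HM].
  pose proof (HM (max M j) (Nat.le_max_l _ _)). unfold R_dist in H.
  pose proof (Ht j (max M j) (Nat.le_max_r _ _)).
  replace (v j - l) with ((v (max M j) - l) - (v (max M j) - v j)) by ring.
  eapply Rle_trans. apply Rabs_triang. rewrite Rabs_Ropp. lra.
Qed.

Lemma tele_ineq r : 2 <= r -> / r^4 <= /3 * (/ (r-1)^3 - / r^3).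
Proof.
  intro H.
  assert (E : /3 * (/ (r-1)^3 - / r^3) - / r^4 = (6*r^2 - 8*r + 3) / (3 * (r-1)^3 * r^4)).
  { field. lra. }
  assert (0 <= (6*r^2 - 8*r + 3) / (3 * (r-1)^3 * r^4)).
  { apply Rmult_le_pos. nra. left. apply Rinv_0_lt_compat.
    repeat apply Rmult_lt_0_compat; try lra; apply pow_lt; lra. }
  lra.
Qed.

Section B.
Variable a : R.
Hypothesis Ha0 : 0 < a.
Hypothesis Ha1 : a < 1.

Lemma Fx_pos x : 0 <= x -> 0 < Fx a x.
Proof.
  intro H. unfold Fx. assert (0 < cc1 a) by (apply cc1_pos; auto). assert (0 < cc2 a) by (apply cc2_pos; auto).
  assert (0 <= cc1 a * x) by (apply Rmult_le_pos; lra).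
  assert (0 <= cc2 a * x^2) by (apply Rmult_le_pos; [lra|apply pow_le; lra]). lra.
Qed.

Lemma Kr_nonneg : 0 <= Kr a.
Proof.
  unfold Kr, Pb. pose proof (K3_pos a). assert (0 < cc1 a) by (apply cc1_pos; auto). assert (0 < cc2 a) by (apply cc2_pos; auto).
  pose proof (Rabs_pos (p4 a)). pose proof (Rabs_pos (p5 a)). pose proof (Rabs_pos (p6 a)).
  pose proof (Rabs_pos (p7 a)). pose proof (Rabs_pos (p8 a)).
  assert (0 <= K3 a * ((1 + cc1 a + cc2 a) * 4)) by (apply Rmult_le_pos; lra). lra.
Qed.

Definition b n := Rpower (INR n) a * W0 a n / Fx a (/ INR n).

Lemma b_pos n : (1 <= n)%nat -> 0 < b n.
Proof.
  intro H. unfold b. assert (0 < INR n) by (apply lt_0_INR; lia).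
  apply Rmult_lt_0_compat. apply Rmult_lt_0_compat. unfold Rpower; apply exp_pos.
  apply W0_pos; auto. apply Rinv_0_lt_compat, Fx_pos. left; apply Rinv_0_lt_compat; lra.
Qed.

Lemma b_rec n : (1 <= n)%nat ->
  b (S n) = b n * (Rpower (1 + / INR n) a * (1 - a * / INR n) * Fx a (/ INR n) / Fx a (/ INR n / (1 + / INR n))).
Proof.
  intro H. assert (Hn : 0 < INR n) by (apply lt_0_INR; lia).
  unfold b. rewrite W0_succ by (auto; lia). rewrite S_INR.
  assert (E1 : Rpower (INR n + 1) a = Rpower (INR n) a * Rpower (1 + / INR n) a).
  { rewrite Rpower_mult_distr. f_equal. field. lra. lra.
    assert (0 < / INR n) by (apply Rinv_0_lt_compat; lra). lra. }
  assert (E2 : / (INR n + 1) = / INR n / (1 + / INR n)) by (field; lra).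
  rewrite E1, E2.
  assert (0 < Fx a (/ INR n)) by (apply Fx_pos; left; apply Rinv_0_lt_compat; lra).
  assert (0 < Fx a (/ INR n / (1 + / INR n))).
  { apply Fx_pos. assert (0 < / INR n) by (apply Rinv_0_lt_compat; lra).
    unfold Rdiv. apply Rmult_le_pos. lra. left; apply Rinv_0_lt_compat; lra. }
  field. lra.
Qed.

Lemma rho_n n : (2 <= n)%nat -> Rabs (b (S n) / b n - 1) <= Kr a / INR n ^ 4.
Proof.
  intro H. assert (Hn : 2 <= INR n) by (apply (le_INR 2); lia).
  rewrite b_rec by lia. pose proof (b_pos n ltac:(lia)).
  replace (b n * _ / b n) with
    (Rpower (1 + / INR n) a * (1 - a * / INR n) * Fx a (/ INR n) / Fx a (/ INR n / (1 + / INR n)))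
    by (assert (0 < Fx a (/ INR n / (1 + / INR n))) by (apply Fx_pos; unfold Rdiv; apply Rmult_le_pos;
          [left; apply Rinv_0_lt_compat; lra | left; apply Rinv_0_lt_compat;
           assert (0 < / INR n) by (apply Rinv_0_lt_compat; lra); lra]);
        field; repeat split; apply Rgt_not_eq; lra).
  eapply Rle_trans. apply rho_bound; try assumption.
  split. apply Rinv_0_lt_compat; lra. assert (/INR n <= /2) by (apply Rinv_le_contravar; lra). lra.
  rewrite pow_inv. right. field. lra.
Qed.

Lemma ev_large (A : R) : exists N, forall n, (N <= n)%nat -> A <= INR n.
Proof.
  destruct (INR_unbounded A) as [N HN]. exists N. intros n Hn.
  apply le_INR in Hn. lra.
Qed.

Definition lb n := ln (b n).
Definition Tt n := (2 * Kr a / 3) / (INR n - 1)^3.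

Lemma Tt_bound n : (2 <= n)%nat -> 0 <= Tt n <= (2 * Kr a / 3) * 8 / INR n ^ 3.
Proof.
  intro H. assert (Hn : 2 <= INR n) by (apply (le_INR 2); lia).
  pose proof Kr_nonneg. unfold Tt. split.
  apply Rmult_le_pos. lra. left; apply Rinv_0_lt_compat, pow_lt; lra.
  replace ((2*Kr a/3)*8/INR n^3) with ((2*Kr a/3) * (8 / INR n^3)) by (field; lra).
  unfold Rdiv at 1. apply Rmult_le_compat_l. lra. unfold Rdiv.
  assert (HH : INR n ^ 3 <= 8 * (INR n - 1)^3).
  { assert (INR n <= 2 * (INR n - 1)) by lra.
    replace (8 * (INR n - 1)^3) with ((2 * (INR n - 1))^3) by ring.
    apply pow_incr. lra. }
  assert (0 < (INR n - 1)^3) by (apply pow_lt; lra).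
  assert (0 < INR n ^ 3) by (apply pow_lt; lra).
  apply Rmult_le_reg_r with ((INR n - 1)^3 * INR n ^ 3).
  apply Rmult_lt_0_compat; lra.
  replace (/ (INR n - 1) ^ 3 * ((INR n - 1) ^ 3 * INR n ^ 3)) with (INR n ^ 3) by (field; lra).
  replace (8 * / INR n ^ 3 * ((INR n - 1) ^ 3 * INR n ^ 3)) with (8 * (INR n - 1)^3) by (field; lra).
  exact HH.
Qed.

Lemma threshold : exists N1, (2 <= N1)%nat /\ forall n, (N1 <= n)%nat -> Kr a / INR n ^ 4 <= 1/2.
Proof.
  destruct (ev_large (2 * Kr a + 2)) as [N HN]. exists (max N 2). split. lia.
  intros n Hn. pose proof (HN n ltac:(lia)). pose proof Kr_nonneg.
  assert (Hn2 : 2 <= INR n) by (apply (le_INR 2); lia).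
  assert (INR n <= INR n ^ 4).
  { replace (INR n ^ 4) with (INR n * (INR n ^ 3)) by ring.
    assert (1 <= INR n ^ 3) by (rewrite <- (pow1 3); apply pow_incr; lra). nra. }
  apply Rmult_le_reg_r with (INR n ^ 4). apply pow_lt; lra.
  unfold Rdiv. rewrite Rmult_assoc, Rinv_l. lra. apply pow_nonzero; lra.
Qed.

Lemma lb_step N1 n : (2 <= N1)%nat -> (forall n, (N1 <= n)%nat -> Kr a / INR n ^ 4 <= 1/2) ->
  (N1 <= n)%nat -> Rabs (lb (S n) - lb n) <= Tt n - Tt (S n).
Proof.
  intros H2 HN Hn. unfold lb.
  pose proof (b_pos n ltac:(lia)). pose proof (b_pos (S n) ltac:(lia)).
  rewrite <- ln_div by assumption.
  pose proof (rho_n n ltac:(lia)). pose proof (HN n Hn).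
  eapply Rle_trans. apply ln_bound. lra.
  assert (Hn2 : 2 <= INR n) by (apply (le_INR 2); lia).
  pose proof (tele_ineq (INR n) Hn2). pose proof Kr_nonneg.
  unfold Tt. rewrite S_INR. replace (INR n + 1 - 1) with (INR n) by ring.
  apply Rle_trans with (2 * (Kr a * / INR n ^ 4)). unfold Rdiv in H1. lra.
  replace (2 * Kr a / 3 / (INR n - 1) ^ 3 - 2 * Kr a / 3 / INR n ^ 3)
    with (2 * Kr a * (/ 3 * (/ (INR n - 1) ^ 3 - / INR n ^ 3))) by (field; lra).
  rewrite <- Rmult_assoc. apply Rmult_le_compat_l. lra. exact H4.
Qed.

Lemma lb_tele N1 n : (2 <= N1)%nat -> (forall n, (N1 <= n)%nat -> Kr a / INR n ^ 4 <= 1/2) ->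
  (N1 <= n)%nat -> forall d, Rabs (lb (n + d) - lb n) <= Tt n - Tt (n + d).
Proof.
  intros H2 HN Hn d. induction d as [|d IH].
  - rewrite Nat.add_0_r. unfold Rminus. rewrite !Rplus_opp_r, Rabs_R0. lra.
  - replace (n + S d)%nat with (S (n + d)) by lia.
    pose proof (lb_step N1 (n+d) H2 HN ltac:(lia)).
    replace (lb (S (n + d)) - lb n) with ((lb (S (n+d)) - lb (n+d)) + (lb (n+d) - lb n)) by ring.
    eapply Rle_trans. apply Rabs_triang. lra.
Qed.

Lemma b_asym : exists L, 0 < L /\ Un_cv b L /\ exists Cb N, forall n, (N <= n)%nat -> Rabs (b n - L) <= Cb / INR n ^ 3.
Proof.
  destruct threshold as [N1 [H2 HN]].
  destruct (conv_tele (fun j => lb (N1 + j)) (fun j => Tt (N1 + j))) as [l [Hl Hb]].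
  - intros j k Hjk. replace (N1 + k)%nat with ((N1 + j) + (k - j))%nat by lia.
    eapply Rle_trans. apply (lb_tele N1); auto; lia.
    pose proof (Tt_bound (N1 + j + (k - j)) ltac:(lia)). lra.
  - intros eps He. pose proof Kr_nonneg.
    destruct (ev_large ((2 * Kr a / 3) * 8 / eps + 1)) as [M HM].
    exists M. pose proof (HM (N1 + M)%nat ltac:(lia)) as HM'.
    pose proof (Tt_bound (N1 + M) ltac:(lia)) as [_ Ht].
    set (r := INR (N1 + M)) in *.
    assert (Hr : 1 <= r). { unfold r. apply (le_INR 1); lia. }
    assert (r <= r^3) by (replace (r^3) with (r * (r*r)) by ring; nra).
    eapply Rle_lt_trans. exact Ht.
    set (K8 := 2 * Kr a / 3 * 8) in *.
    assert (HK : 0 <= K8) by (unfold K8; lra).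
    assert (HKe : K8 / eps * eps = K8) by (field; lra).
    assert (K8 < eps * r) by nra.
    apply Rle_lt_trans with (K8 / r).
    unfold Rdiv; apply Rmult_le_compat_l; [lra| apply Rinv_le_contravar; lra].
    apply Rmult_lt_reg_r with r. lra. unfold Rdiv; rewrite Rmult_assoc, Rinv_l by lra. lra.
  - exists (exp l). split. apply exp_pos. split.
    + apply is_lim_seq_Reals. apply (is_lim_seq_incr_n _ N1).
      apply is_lim_seq_ext with (fun j => exp (lb (N1 + j))).
      { intro j. unfold lb. rewrite exp_ln. f_equal; lia. apply b_pos; lia. }
      apply is_lim_seq_continuous. apply derivable_continuous_pt, derivable_pt_exp.
      apply is_lim_seq_Reals. exact Hl.
    + pose proof Kr_nonneg.
      destruct (ev_large ((2 * Kr a / 3) * 8 * 2)) as [M HM].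
      exists (2 * exp l * ((2 * Kr a / 3) * 8)), (max (max M N1) 2). intros n Hn.
      pose proof (Hb (n - N1)%nat) as Hbn. replace (N1 + (n - N1))%nat with n in Hbn by lia.
      pose proof (Tt_bound n ltac:(lia)) as [Tt0 Tt1].
      assert (Hn2 : 2 <= INR n) by (apply (le_INR 2); lia).
      assert (HnM : (2 * Kr a / 3) * 8 * 2 <= INR n) by (apply HM; lia).
      assert (Tt n <= 1/2).
      { eapply Rle_trans. exact Tt1.
        assert (INR n <= INR n ^ 3).
        { replace (INR n ^ 3) with (INR n * (INR n * INR n)) by ring. nra. }
        apply Rmult_le_reg_r with (INR n ^ 3). apply pow_lt; lra.
        unfold Rdiv. rewrite Rmult_assoc, Rinv_l. lra. apply pow_nonzero; lra. }
      replace (b n) with (exp (lb n)) by (unfold lb; apply exp_ln, b_pos; lia).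
      replace (exp (lb n) - exp l) with (exp l * (exp (lb n - l) - 1))
        by (unfold Rminus; rewrite exp_plus, exp_Ropp; field; apply Rgt_not_eq, exp_pos).
      rewrite Rabs_mult, (Rabs_pos_eq (exp l)) by (left; apply exp_pos).
      pose proof (exp_bound (lb n - l) ltac:(lra)).
      pose proof (exp_pos l).
      apply Rle_trans with (exp l * (2 * Tt n)).
      apply Rmult_le_compat_l; lra.
      unfold Rdiv in *. replace (2 * exp l * (2 * Kr a * / 3 * 8) * / INR n ^ 3)
        with (exp l * (2 * (2 * Kr a * / 3 * 8 * / INR n ^ 3))) by ring.
      apply Rmult_le_compat_l; lra.
Qed.
End B.

Lemma Gamma_up x g : (forall k, x + INR k <> 0) ->
  Un_cv (gamma_seq x) g -> Un_cv (gamma_seq (x+1)) (g * x).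
Proof.
  intros H Hg.
  assert (Hx : x <> 0) by (specialize (H 0%nat); simpl in H; lra).
  apply is_lim_seq_Reals in Hg. apply is_lim_seq_Reals.
  apply is_lim_seq_ext_loc with (fun m => gamma_seq x m * (x * / (1 + (x+1) * / INR m))).
  - exists 1%nat. intros m Hm. rewrite (gamma_seq_rel x m) by assumption.
    assert (0 < INR m) by (apply lt_0_INR; lia).
    assert (x + INR m + 1 <> 0) by (specialize (H (S m)); rewrite S_INR in H; lra).
    assert (1 + (x+1) * / INR m <> 0).
    { assert (E : 1 + (x+1) * / INR m = (x + INR m + 1) / INR m) by (field; lra).
      rewrite E. unfold Rdiv. apply Rmult_integral_contrapositive. split. auto.
      apply Rinv_neq_0_compat; lra. }
    field. repeat split; lra.
  - replace (g * x) with (g * (x * / (1 + (x+1) * 0))) by (field; lra).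
    apply is_lim_seq_mult'. exact Hg.
    apply is_lim_seq_mult'. apply is_lim_seq_const.
    apply (is_lim_seq_inv _ (Finite (1 + (x+1)*0))). apply is_lim_seq_plus'. apply is_lim_seq_const.
    apply is_lim_seq_mult'. apply is_lim_seq_const. apply lim_inv_n.
    simpl. intro E; injection E; lra.
Qed.

Section Gm.
Variable a : R.
Hypothesis Ha0 : 0 < a.
Hypothesis Ha1 : a < 1.

Lemma nz1 : forall k, (1 - a) + INR k <> 0.
Proof. intro k. pose proof (pos_INR k). lra. Qed.
Lemma nz0 : forall k, (- a) + INR k <> 0.
Proof. intro k. destruct k as [|k]. simpl; lra. rewrite S_INR. pose proof (pos_INR k). lra. Qed.
Lemma nzm : forall k, (-1 - a) + INR k <> 0.
Proof. intro k. destruct k as [|[|k]]. simpl; lra. simpl; lra. rewrite !S_INR. pose proof (pos_INR k). lra. Qed.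

Lemma gamma1 L : 0 < L -> Un_cv (b a) L -> Un_cv (gamma_seq (1 - a)) (/ L).
Proof.
  intros HL Hb. apply is_lim_seq_Reals in Hb. apply is_lim_seq_Reals.
  apply is_lim_seq_ext_loc with (fun m => (/ (1 + / INR m)) * (Rpower (INR (m+2)) a / Rpower (INR m) a)
      * / (b a (m+2) * Fx a (/ INR (m+2)))).
  - exists 1%nat. intros m Hm.
    assert (Hm0 : 0 < INR m) by (apply lt_0_INR; lia).
    assert (Hm2 : INR (m+2) = INR m + 2) by (rewrite plus_INR; simpl; ring).
    unfold gamma_seq.
    rewrite <- (W0_fact a Ha0 Ha1 (S m)).
    change (W0 a (S (S m))) with (W0 a (S (S m))).
    replace (S (S m)) with (m+2)%nat by lia.
    rewrite fact_simpl, mult_INR, S_INR.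
    pose proof (INR_fact_neq_0 m).
    pose proof (W0_pos a Ha0 Ha1 (m+2) ltac:(lia)).
    assert (0 < Fx a (/ INR (m+2))) by (apply Fx_pos; auto; left; apply Rinv_0_lt_compat; lra).
    unfold b. replace (1 - a) with (1 + - a) by ring. rewrite Rpower_plus, Rpower_1 by lra.
    rewrite Rpower_Ropp.
    assert (0 < Rpower (INR m) a) by (unfold Rpower; apply exp_pos).
    assert (0 < Rpower (INR (m+2)) a) by (unfold Rpower; apply exp_pos).
    field. repeat split; try lra.
  - replace (Finite (/L)) with (Finite ((/ (1 + 0)) * 1 * / (L * Fx a 0)))
      by (f_equal; unfold Fx; field; lra).
    apply is_lim_seq_mult'. apply is_lim_seq_mult'.
    + apply (is_lim_seq_inv _ (Finite (1 + 0))). apply is_lim_seq_plus'. apply is_lim_seq_const.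
      apply lim_inv_n. simpl. intro E; injection E; lra.
    + apply is_lim_seq_le_le_loc with (fun _ => 1) (fun m => 1 + 2 * / INR m).
      * exists 1%nat. intros m Hm.
        assert (Hm0 : 0 < INR m) by (apply lt_0_INR; lia).
        assert (Hm2 : INR (m+2) = INR m + 2) by (rewrite plus_INR; simpl; ring).
        set (e := 1 + 2 * / INR m).
        assert (He : 1 <= e) by (unfold e; assert (0 < / INR m) by (apply Rinv_0_lt_compat; lra); lra).
        assert (Hr : Rpower (INR (m+2)) a / Rpower (INR m) a = Rpower e a).
        { rewrite Hm2. replace (INR m + 2) with (INR m * e) by (unfold e; field; lra).
          rewrite <- Rpower_mult_distr by lra. field. unfold Rpower; apply Rgt_not_eq, exp_pos. }
        rewrite Hr. split.
        rewrite <- (Rpower_O e) at 1 by lra. apply Rle_Rpower; lra.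
        rewrite <- (Rpower_1 e) at 2 by lra. apply Rle_Rpower; lra.
      * apply is_lim_seq_const.
      * replace (Finite 1) with (Finite (1 + 2 * 0)) by (f_equal; ring).
        apply is_lim_seq_plus'. apply is_lim_seq_const. apply is_lim_seq_mult'. apply is_lim_seq_const.
        apply lim_inv_n.
    + apply (is_lim_seq_inv _ (Finite (L * Fx a 0))). apply is_lim_seq_mult'.
      apply (is_lim_seq_incr_n (b a) 2). exact Hb.
      apply is_lim_seq_continuous. apply derivable_continuous_pt. unfold Fx. reg.
      apply (is_lim_seq_incr_n (fun n => / INR n) 2). apply lim_inv_n.
      simpl. intro E; injection E. unfold Fx. intro. assert (L = 0) by (rewrite <- H; ring). lra.
Qed.
End Gm.

Lemma gam_vals a L : 0 < a -> a < 1 -> 0 < L -> Un_cv (b a) L ->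
  Gamma (1 - a) = / L /\ Gamma (- a) = / L / (- a) /\
  Gamma (-1 - a) = / L / (- a) / (-1 - a) /\ Gamma (2 - a) = / L * (1 - a).
Proof.
  intros Ha0 Ha1 HL Hb.
  pose proof (gamma1 a Ha0 Ha1 L HL Hb) as G1.
  assert (G0 : Un_cv (gamma_seq (- a)) (/ L / (- a))).
  { apply Gamma_shift. intro k; apply nz0; auto. replace (- a + 1) with (1 - a) by ring. exact G1. }
  assert (Gm : Un_cv (gamma_seq (-1 - a)) (/ L / (- a) / (-1 - a))).
  { apply Gamma_shift. intro k; apply nzm; auto. replace (-1 - a + 1) with (- a) by ring. exact G0. }
  assert (G2 : Un_cv (gamma_seq (2 - a)) (/ L * (1 - a))).
  { replace (2 - a) with ((1 - a) + 1) by ring. apply Gamma_up. intro k; apply nz1; auto. exact G1. }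
  repeat split; apply Gamma_eq; assumption.
Qed.

Lemma rp_k r a k : 0 < r -> Rpower r (INR k + a) = r ^ k * Rpower r a.
Proof. intro H. rewrite Rpower_plus, Rpower_pow by exact H. reflexivity. Qed.

Definition k3 a := (-1/12)*a^2 + (-3/8)*a^3 + (-19/48)*a^4 + (-1/8)*a^5 + (-1/48)*a^6.

Lemma Fx_le a x : 0 < a -> a < 1 -> 0 <= x <= 1 -> Fx a x <= 1 + cc1 a + cc2 a.
Proof.
  intros Ha0 Ha1 Hx. unfold Fx.
  assert (0 < cc1 a) by (apply cc1_pos; auto). assert (0 < cc2 a) by (apply cc2_pos; auto).
  assert (x^2 <= 1) by (simpl; nra).
  assert (cc1 a * x <= cc1 a * 1) by (apply Rmult_le_compat_l; lra).
  assert (cc2 a * x^2 <= cc2 a * 1) by (apply Rmult_le_compat_l; lra). lra.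
Qed.

Theorem part1 (alpha : R) (Ha0 : 0 < alpha) (Ha1 : alpha < 1) :
  (exists C N, forall n : nat, (2 <= n)%nat -> (N <= n)%nat ->
     Rabs (W0 alpha n
           - ( 1 / (Gamma (1 - alpha) * Rpower (INR n) alpha)
             - (alpha + 1) / (2 * Gamma (- alpha) * Rpower (INR n) (1 + alpha))
             + (2 + alpha) * (1 + 3 * alpha)
                 / (24 * Gamma (-1 - alpha) * Rpower (INR n) (2 + alpha))))
     <= C / Rpower (INR n) (3 + alpha)).
Proof.
  destruct (b_asym alpha Ha0 Ha1) as [L [HL [Hcv [Cb [Nb Hbb]]]]].
  destruct (gam_vals alpha L Ha0 Ha1 HL Hcv) as [G1 [G0 [Gm G2]]].
  set (a := alpha) in *.
  exists (Cb * (1 + cc1 a + cc2 a)), Nb. intros n Hn2 HnN.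
  set (r := INR n).
  assert (Hr : 2 <= r) by (unfold r; apply (le_INR 2); lia).
  set (pa := Rpower r a).
  assert (Hpa : 0 < pa) by (unfold pa, Rpower; apply exp_pos).
  assert (HF : 0 < Fx a (/ r)) by (apply Fx_pos; auto; left; apply Rinv_0_lt_compat; lra).
  assert (HW : W0 a n = b a n * Fx a (/ r) / pa).
  { unfold b. fold r. fold pa. field. lra. }
  assert (E1 : Rpower r (1 + a) = r * pa) by (rewrite Rpower_plus, Rpower_1 by lra; reflexivity).
  assert (E2 : Rpower r (2 + a) = r^2 * pa).
  { replace (2 + a) with (1 + (1 + a)) by ring. rewrite Rpower_plus, E1, Rpower_1 by lra. ring. }
  assert (E3 : Rpower r (3 + a) = r^3 * pa).
  { replace (3 + a) with (1 + (2 + a)) by ring. rewrite Rpower_plus, E2, Rpower_1 by lra. ring. }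
  rewrite E1, E2, E3, G1, G0, Gm, HW.
  replace (b a n * Fx a (/ r) / pa -
   (1 / (/ L * pa) - (a + 1) / (2 * (/ L / - a) * (r * pa)) +
    (2 + a) * (1 + 3 * a) / (24 * (/ L / - a / (-1 - a)) * (r ^ 2 * pa))))
   with ((b a n - L) * Fx a (/ r) / pa).
  2:{ unfold Fx, cc1, cc2. field. repeat split; lra. }
  unfold Rdiv. rewrite !Rabs_mult.
  rewrite (Rabs_pos_eq (Fx a (/ r))) by lra.
  rewrite (Rabs_pos_eq (/ pa)) by (left; apply Rinv_0_lt_compat; lra).
  pose proof (Hbb n HnN) as Hb. unfold Rdiv in Hb. fold r in Hb.
  assert (HF2 : Fx a (/ r) <= 1 + cc1 a + cc2 a).
  { apply Fx_le; auto. split. left; apply Rinv_0_lt_compat; lra.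
    assert (/ r <= / 2) by (apply Rinv_le_contravar; lra). lra. }
  rewrite Rinv_mult.
  assert (0 < / r^3) by (apply Rinv_0_lt_compat, pow_lt; lra).
  assert (0 < / pa) by (apply Rinv_0_lt_compat; lra).
  pose proof (Rabs_pos (b a n - L)).
  apply Rle_trans with ((Cb * / r^3) * (1 + cc1 a + cc2 a) * / pa).
  apply Rmult_le_compat_r. lra. apply Rmult_le_compat; lra.
  right. ring.
Qed.

Theorem part2 (alpha : R) (Ha0 : 0 < alpha) (Ha1 : alpha < 1) :
  (exists C N, forall n : nat, (2 <= n)%nat -> (N <= n)%nat ->
     Rabs (W1 alpha n
           - (alpha - 2) / (24 * Gamma (- alpha) * Rpower (INR n) (1 + alpha)))
     <= C / Rpower (INR n) (2 + alpha)).
Proof.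
  destruct (b_asym alpha Ha0 Ha1) as [L [HL [Hcv [Cb [Nb Hbb]]]]].
  destruct (gam_vals alpha L Ha0 Ha1 HL Hcv) as [G1 [G0 [Gm G2]]].
  set (a := alpha) in *.
  set (Fm := 1 + cc1 a + cc2 a).
  exists ((Cb * Fm + L * Rabs (k3 a) + L * K3 (1 - a)) / (1 - a)), Nb. intros n Hn2 HnN.
  set (r := INR n).
  assert (Hr : 2 <= r) by (unfold r; apply (le_INR 2); lia).
  set (pa := Rpower r a).
  assert (Hpa : 0 < pa) by (unfold pa, Rpower; apply exp_pos).
  assert (HF : 0 < Fx a (/ r)) by (apply Fx_pos; auto; left; apply Rinv_0_lt_compat; lra).
  assert (HW : W0 a n = b a n * Fx a (/ r) / pa).
  { unfold b. fold r. fold pa. field. lra. }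
  assert (E1 : Rpower r (1 + a) = r * pa) by (rewrite Rpower_plus, Rpower_1 by lra; reflexivity).
  assert (E2 : Rpower r (2 + a) = r^2 * pa).
  { replace (2 + a) with (1 + (1 + a)) by ring. rewrite Rpower_plus, E1, Rpower_1 by lra. ring. }
  set (y := a / (2 * r)).
  assert (Hy : 0 < y <= 1/2).
  { unfold y. split. apply Rmult_lt_0_compat; [lra| apply Rinv_0_lt_compat; lra].
    apply Rmult_le_reg_r with (2*r). lra. unfold Rdiv. rewrite Rmult_assoc, Rinv_l by lra. lra. }
  assert (HP : Rpower (r - a/2) (1 - a) = r / pa * Rpower (1 + -1 * y) (1 - a)).
  { assert (Hr1 : Rpower r (1 - a) = r / pa).
    { replace (1 - a) with (1 + - a) by ring. rewrite Rpower_plus, Rpower_1, Rpower_Ropp by lra. reflexivity. }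
    rewrite <- Hr1. rewrite Rpower_mult_distr. f_equal. unfold y. field. lra. lra. lra. }
  pose proof (taylor3 (1 - a) (-1) y ltac:(unfold Rabs; destruct Rcase_abs; lra) Hy ltac:(lra)) as Ht.
  set (E := Rpower (1 + -1 * y) (1 - a) - _) in Ht.
  fold (K3 (1 - a)) in Ht.
  assert (HT : Rpower (1 + -1 * y) (1 - a) =
     (1 + (1 - a) * -1 * y + (1 - a) * (1 - a - 1) / 2 * (-1) ^ 2 * y ^ 2 +
      (1 - a) * (1 - a - 1) * (1 - a - 2) / 6 * (-1) ^ 3 * y ^ 3) + E) by (unfold E; ring).
  unfold W1. rewrite (T_id a Ha0 Ha1 n ltac:(lia)). fold r.
  rewrite HP, HT, HW, G2, G0, E1, E2.
  replace ((r - a) * (b a n * Fx a (/ r) / pa) / (1 - a) -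
    r / pa * (1 + (1 - a) * -1 * y + (1 - a) * (1 - a - 1) / 2 * (-1) ^ 2 * y ^ 2 +
      (1 - a) * (1 - a - 1) * (1 - a - 2) / 6 * (-1) ^ 3 * y ^ 3 + E) / (/ L * (1 - a)) -
    (a - 2) / (24 * (/ L / - a) * (r * pa)))
   with (((r - a) * (b a n - L) * Fx a (/ r) / pa + L * r * k3 a * (/ r)^3 / pa - L * r * E / pa) / (1 - a)).
  2:{ unfold y, Fx, cc1, cc2, k3. field. repeat split; lra. }
  assert (Hq : 0 < r^2 * pa) by (apply Rmult_lt_0_compat; [apply pow_lt|]; lra).
  set (q := / (r^2 * pa)).
  assert (Hq' : 0 < q) by (apply Rinv_0_lt_compat; lra).
  pose proof (Hbb n HnN) as Hb. fold r in Hb.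
  assert (HF2 : Fx a (/ r) <= Fm).
  { apply Fx_le; auto. split. left; apply Rinv_0_lt_compat; lra.
    assert (/ r <= / 2) by (apply Rinv_le_contravar; lra). lra. }
  assert (T1 : Rabs ((r - a) * (b a n - L) * Fx a (/ r) / pa) <= Cb * Fm * q).
  { replace ((r - a) * (b a n - L) * Fx a (/ r) / pa) with ((b a n - L) * ((r - a) * Fx a (/ r) / pa)) by (field; lra).
    rewrite Rabs_mult. rewrite (Rabs_pos_eq ((r - a) * Fx a (/ r) / pa)).
    2:{ apply Rmult_le_pos. apply Rmult_le_pos; lra. left; apply Rinv_0_lt_compat; lra. }
    apply Rle_trans with (Cb / r^3 * ((r - a) * Fx a (/ r) / pa)).
    apply Rmult_le_compat_r. apply Rmult_le_pos. apply Rmult_le_pos; lra. left; apply Rinv_0_lt_compat; lra.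
    exact Hb.
    assert (HCb : 0 <= Cb).
    { assert (0 <= Cb / r^3) by (eapply Rle_trans; [apply Rabs_pos|exact Hb]).
      apply Rmult_le_reg_r with (/ r^3). apply Rinv_0_lt_compat, pow_lt; lra. lra. }
    unfold q. replace (Cb / r ^ 3 * ((r - a) * Fx a (/ r) / pa)) with
      (Cb * ((r - a) / r * Fx a (/ r)) * / (r ^ 2 * pa)) by (field; lra).
    apply Rmult_le_compat_r. left; apply Rinv_0_lt_compat; lra. apply Rmult_le_compat_l. exact HCb.
    assert ((r - a) / r <= 1). { apply Rmult_le_reg_r with r. lra. unfold Rdiv. rewrite Rmult_assoc, Rinv_l by lra. lra. }
    assert (0 <= (r - a) / r). { apply Rmult_le_pos. lra. left; apply Rinv_0_lt_compat; lra. }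
    apply Rle_trans with (1 * Fx a (/ r)). apply Rmult_le_compat_r; lra. lra. }
  assert (T2 : Rabs (L * r * k3 a * (/ r)^3 / pa) = L * Rabs (k3 a) * q).
  { unfold q. replace (L * r * k3 a * (/ r)^3 / pa) with (k3 a * (L * / (r^2 * pa))) by (field; lra).
    rewrite Rabs_mult, (Rabs_pos_eq (L * / (r^2 * pa))). ring.
    apply Rmult_le_pos. lra. left; apply Rinv_0_lt_compat; lra. }
  assert (T3 : Rabs (L * r * E / pa) <= L * K3 (1 - a) * q).
  { pose proof (K3_pos (1 - a)).
    replace (L * r * E / pa) with (E * (L * r / pa)) by (field; lra).
    rewrite Rabs_mult, (Rabs_pos_eq (L * r / pa)).
    2:{ apply Rmult_le_pos. apply Rmult_le_pos; lra. left; apply Rinv_0_lt_compat; lra. }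
    apply Rle_trans with (K3 (1 - a) * y ^ 4 * (L * r / pa)).
    apply Rmult_le_compat_r. apply Rmult_le_pos. apply Rmult_le_pos; lra. left; apply Rinv_0_lt_compat; lra.
    exact Ht.
    assert (Hy4 : y ^ 4 * r <= / r ^ 2).
    { assert (y <= / r). { unfold y. apply Rmult_le_reg_r with (2*r). lra. unfold Rdiv.
        rewrite Rmult_assoc, Rinv_l by lra. replace (/ r * (2 * r)) with 2 by (field; lra). lra. }
      assert (y^4 <= (/ r)^4) by (apply pow_incr; lra).
      assert (0 < / r) by (apply Rinv_0_lt_compat; lra).
      apply Rle_trans with ((/ r)^4 * r). apply Rmult_le_compat_r; lra.
      replace ((/ r)^4 * r) with (/ r^2 * / r) by (field; lra).
      assert (/ r <= 1) by (rewrite <- Rinv_1; apply Rinv_le_contravar; lra).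
      assert (0 < / r^2) by (apply Rinv_0_lt_compat, pow_lt; lra).
      nra. }
    unfold q. replace (K3 (1 - a) * y ^ 4 * (L * r / pa)) with (L * K3 (1 - a) * ((y^4 * r) * / pa)) by (field; lra).
    replace (L * K3 (1 - a) * / (r ^ 2 * pa)) with (L * K3 (1 - a) * (/ r^2 * / pa)) by (field; lra).
    apply Rmult_le_compat_l. apply Rmult_le_pos; lra.
    apply Rmult_le_compat_r. left; apply Rinv_0_lt_compat; lra. exact Hy4. }
  unfold Rdiv at 1. rewrite Rabs_mult, (Rabs_pos_eq (/ (1 - a))) by (left; apply Rinv_0_lt_compat; lra).
  replace ((Cb * Fm + L * Rabs (k3 a) + L * K3 (1 - a)) / (1 - a) / (r ^ 2 * pa))
    with ((Cb * Fm * q + L * Rabs (k3 a) * q + L * K3 (1 - a) * q) * / (1 - a)) by (unfold q; field; lra).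
  apply Rmult_le_compat_r. left; apply Rinv_0_lt_compat; lra.
  eapply Rle_trans. apply Rabs_triang. rewrite Rabs_Ropp.
  eapply Rle_trans. apply Rplus_le_compat_r. apply Rabs_triang.
  lra.
Qed.

Theorem lemma2 (alpha : R) (Ha0 : 0 < alpha) (Ha1 : alpha < 1) :
  (exists C N, forall n : nat, (2 <= n)%nat -> (N <= n)%nat ->
     Rabs (W0 alpha n
           - ( 1 / (Gamma (1 - alpha) * Rpower (INR n) alpha)
             - (alpha + 1) / (2 * Gamma (- alpha) * Rpower (INR n) (1 + alpha))
             + (2 + alpha) * (1 + 3 * alpha)
                 / (24 * Gamma (-1 - alpha) * Rpower (INR n) (2 + alpha))))
     <= C / Rpower (INR n) (3 + alpha))
  /\
  (exists C N, forall n : nat, (2 <= n)%nat -> (N <= n)%nat ->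
     Rabs (W1 alpha n
           - (alpha - 2) / (24 * Gamma (- alpha) * Rpower (INR n) (1 + alpha)))
     <= C / Rpower (INR n) (2 + alpha)).
Proof.
  split. apply part1; assumption. apply part2; assumption.
Qed.
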